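(* Fix $k\in\mathbb{N}$ with $k\ge2$ and let $S=\mathbb{N}_0\cup\mathbb{R}_{\ge k}$. Then $S$ is a positive semiring that is a BFS but not an FFS.
   Context: A positive semiring is a subset of $\mathbb{R}_{\ge0}$ containing $0$ and $1$ and closed under the usual addition and multiplication. For such $S$, $S^*=S\setminus\{0\}$ is a multiplicative monoid; an atom is a nonunit $a\in S^*$ with $a=bc$ ($b,c\in S^*$) forcing $b$ or $c$ to be a unit; $S$ is atomic if every nonunit of $S^*$ is a finite product of atoms. $S$ is a BFS if it is atomic and every nonunit has a finite set of factorization lengths; $S$ is an FFS if it is atomic and every element of $S^*$ has only finitely many factorizations into atoms up to order and associates. *)

(* Defs.v *)
From Stdlib Require Import Reals List Permutation.
Open Scope R_scope.

Definition positive_semiring (S : R -> Prop) : Prop :=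
  (forall x, S x -> 0 <= x) /\ S 0 /\ S 1 /\
  (forall x y, S x -> S y -> S (x + y)) /\
  (forall x y, S x -> S y -> S (x * y)).

Definition Sstar (S : R -> Prop) (x : R) : Prop := S x /\ x <> 0.

Definition sunit (S : R -> Prop) (u : R) : Prop :=
  Sstar S u /\ exists v, Sstar S v /\ u * v = 1.

Definition atom (S : R -> Prop) (a : R) : Prop :=
  Sstar S a /\ ~ sunit S a /\
  forall b c, Sstar S b -> Sstar S c -> a = b * c -> sunit S b \/ sunit S c.

Definition lprod (l : list R) : R := fold_right Rmult 1 l.

Definition factorization (S : R -> Prop) (x : R) (l : list R) : Prop :=
  Forall (atom S) l /\ lprod l = x.

Definition atomic (S : R -> Prop) : Prop :=
  forall x, Sstar S x -> ~ sunit S x -> exists l, factorization S x l.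

Definition BFS (S : R -> Prop) : Prop :=
  atomic S /\
  forall x, Sstar S x -> ~ sunit S x ->
    exists L : list nat,
      forall l, factorization S x l -> In (length l) L.

Definition associated (S : R -> Prop) (a b : R) : Prop :=
  exists u, sunit S u /\ a = u * b.

Definition fact_equiv (S : R -> Prop) (l1 l2 : list R) : Prop :=
  exists l2', Permutation l2 l2' /\ Forall2 (associated S) l1 l2'.

Definition FFS (S : R -> Prop) : Prop :=
  atomic S /\
  forall x, Sstar S x ->
    exists F : list (list R),
      forall l, factorization S x l ->
        exists l', In l' F /\ fact_equiv S l l'.

Definition S_k (k : nat) (x : R) : Prop :=
  (exists n : nat, x = INR n) \/ INR k <= x.

(* Main.v *)
Require Import Defs.
From Stdlib Require Import Reals List Permutation Lra Lia Classical.
Open Scope R_scope.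

Section H.
Variable k : nat.
Hypothesis hk : (2 <= k)%nat.

Lemma k2 : 2 <= INR k.
Proof. replace 2 with (INR 2) by (simpl; lra). apply le_INR; exact hk. Qed.

Lemma star_cases y : Sstar (S_k k) y ->
  y = 1 \/ INR k <= y \/ exists n, y = INR n /\ 2 <= INR n.
Proof.
  intros [[[n ->]|Hy] Hn]; [|right; left; exact Hy].
  destruct n as [|[|n]].
  - simpl in Hn; lra.
  - left; reflexivity.
  - right; right; exists (S (S n)); split; [reflexivity|].
    replace 2 with (INR 2) by (simpl; lra). apply le_INR; lia.
Qed.

Lemma star_ge1 y : Sstar (S_k k) y -> 1 <= y.
Proof. intro H; pose proof k2; destruct (star_cases y H) as [->|[?|[n [-> ?]]]]; lra. Qed.

Lemma star_ge2 y : Sstar (S_k k) y -> y <> 1 -> 2 <= y.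
Proof. intros H H1; pose proof k2; destruct (star_cases y H) as [->|[?|[n [-> ?]]]]; lra. Qed.

Lemma one_star : Sstar (S_k k) 1.
Proof. split; [left; exists 1%nat; simpl; reflexivity| lra]. Qed.

Lemma sunit_iff u : sunit (S_k k) u <-> u = 1.
Proof.
  split.
  - intros [Hu [v [Hv E]]]. pose proof (star_ge1 u Hu); pose proof (star_ge1 v Hv). nra.
  - intros ->. split; [apply one_star|exists 1; split; [apply one_star|lra]].
Qed.

Lemma lprod_app l1 l2 : lprod (l1 ++ l2) = lprod l1 * lprod l2.
Proof. induction l1; simpl; [lra|rewrite IHl1; lra]. Qed.

Lemma atomic_aux N : forall x, x <= INR N -> Sstar (S_k k) x -> x <> 1 ->
  exists l, factorization (S_k k) x l.
Proof.
  induction N as [|N IH]; intros x Hx Hs H1.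
  - pose proof (star_ge2 x Hs H1); simpl in Hx; lra.
  - destruct (classic (exists b c, Sstar (S_k k) b /\ Sstar (S_k k) c /\ x = b*c /\ b <> 1 /\ c <> 1))
      as [[b [c [Hb [Hc [E [Hb1 Hc1]]]]]]|Hn].
    + pose proof (star_ge2 b Hb Hb1); pose proof (star_ge2 c Hc Hc1).
      rewrite S_INR in Hx.
      destruct (IH b) as [lb [Fb Pb]]; [nra|auto|auto|].
      destruct (IH c) as [lc [Fc Pc]]; [nra|auto|auto|].
      exists (lb ++ lc); split; [apply Forall_app; auto|rewrite lprod_app; subst; reflexivity].
    + exists (x :: nil). split; [|simpl; lra]. constructor; [|constructor].
      split; [exact Hs|split; [rewrite sunit_iff; exact H1|]].
      intros b c Hb Hc E. rewrite !sunit_iff.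
      destruct (classic (b = 1)); [left; auto|].
      destruct (classic (c = 1)); [right; auto|].
      exfalso; apply Hn; exists b, c; auto.
Qed.

Lemma atom_ge2 a : atom (S_k k) a -> 2 <= a.
Proof. intros [Hs [Hu _]]. apply star_ge2; auto. intro E; apply Hu, sunit_iff; auto. Qed.

Lemma lprod_ge l : Forall (fun a => 2 <= a) l -> 1 + INR (length l) <= lprod l.
Proof.
  induction l as [|a t IH]; intros HF; [simpl; lra|].
  inversion HF; subst. specialize (IH H2).
  change (length (a :: t)) with (S (length t)). rewrite S_INR.
  change (lprod (a :: t)) with (a * lprod t).
  pose proof (pos_INR (length t)). nra.
Qed.

Lemma avoid (l : list R) : forall p q, p < q -> exists a, p < a < q /\ ~ In a l.
Proof.
  induction l as [|h t IH]; intros p q Hpq.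
  - exists ((p+q)/2); split; [lra|auto].
  - destruct (Rle_dec h ((p+q)/2)).
    + destruct (IH ((p+q)/2) q) as [a [Ha Hn]]; [lra|].
      exists a; split; [lra|]. intros [E|E]; [lra|auto].
    + destruct (IH p ((p+q)/2)) as [a [Ha Hn]]; [lra|].
      exists a; split; [lra|]. intros [E|E]; [lra|auto].
Qed.

Lemma atom_mid a : INR k < a < INR k + 1 -> atom (S_k k) a.
Proof.
  intros Ha. pose proof k2.
  assert (NI : forall n, a <> INR n).
  { intros n E. subst. assert (k < n)%nat by (apply INR_lt; lra).
    assert (INR (S k) <= INR n) by (apply le_INR; lia). rewrite S_INR in *. lra. }
  assert (Hs : Sstar (S_k k) a) by (split; [right; lra|lra]).
  split; [exact Hs|split; [rewrite sunit_iff; lra|]].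
  intros b c Hb Hc E. rewrite !sunit_iff.
  destruct (star_cases b Hb) as [->|[Hb'|[n [En Hn]]]]; [left; auto| |];
  (destruct (star_cases c Hc) as [->|[Hc'|[m [Em Hm]]]]; [right; auto| |]);
  exfalso; try nra.
  apply (NI (n*m)%nat). rewrite mult_INR; subst; reflexivity.
Qed.

End H.

Theorem mainTheorem8 (k : nat) (hk : (2 <= k)%nat) :
  positive_semiring (S_k k) /\ BFS (S_k k) /\ ~ FFS (S_k k).
Proof.
  pose proof (k2 k hk) as K2.
  assert (AT : atomic (S_k k)).
  { intros x Hs Hu. destruct (INR_unbounded x) as [N HN].
    apply (atomic_aux k hk N); [lra|auto|]. intro E; apply Hu, sunit_iff; auto. }
  split; [|split].
  - split; [|split; [|split; [|split]]].
    + intros x [[n ->]|H]; [apply pos_INR|lra].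
    + left; exists 0%nat; reflexivity.
    + left; exists 1%nat; reflexivity.
    + intros x y [[n ->]|Hx] [[m ->]|Hy].
      * left; exists (n+m)%nat; rewrite plus_INR; reflexivity.
      * right; pose proof (pos_INR n); lra.
      * right; pose proof (pos_INR m); lra.
      * right; lra.
    + intros x y [[n ->]|Hx] [[m ->]|Hy].
      * left; exists (n*m)%nat; rewrite mult_INR; reflexivity.
      * destruct n as [|n]; [left; exists 0%nat; simpl; ring|right].
        rewrite S_INR; pose proof (pos_INR n); nra.
      * destruct m as [|m]; [left; exists 0%nat; simpl; ring|right].
        rewrite S_INR; pose proof (pos_INR m); nra.
      * right; nra.
  - split; [exact AT|].
    intros x Hs Hu. destruct (INR_unbounded x) as [N HN].
    exists (seq 0 N). intros l [HF HP].
    assert (Forall (fun a => 2 <= a) l) by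
      (eapply Forall_impl; [|exact HF]; intros a; apply atom_ge2; auto).
    pose proof (lprod_ge l H). rewrite HP in H0.
    apply in_seq. split; [lia|].
    assert (INR (length l) < INR N) by lra. apply INR_lt in H1. lia.
  - intros [_ H].
    set (c := INR k + /2). set (x := c * c).
    assert (Hx : Sstar (S_k k) x) by (split; [right|]; unfold x, c; nra).
    destruct (H x Hx) as [F HF].
    destruct (avoid (concat F) c (c + /4)) as [a [Ha Hn]]; [lra|].
    assert (Hc0 : 2 < c) by (unfold c; lra).
    set (b := x / a).
    assert (Hb : b * a = x) by (unfold b; field; lra).
    assert (A1 : atom (S_k k) a) by (apply atom_mid; auto; unfold c in *; lra).
    assert (b < c).
    { destruct (Rlt_le_dec b c) as [|Hbc]; auto. unfold x in Hb.
      assert (c * c < c * a) by (apply Rmult_lt_compat_l; lra).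
      assert (c * a <= b * a) by (apply Rmult_le_compat_r; lra). lra. }
    assert (INR k < b).
    { destruct (Rlt_le_dec (INR k) b) as [|Hbc]; auto. unfold x in Hb.
      assert (b * a <= INR k * a) by (apply Rmult_le_compat_r; lra).
      assert (INR k * a < INR k * (c + /4)) by (apply Rmult_lt_compat_l; lra).
      unfold c in *; nra. }
    assert (A2 : atom (S_k k) b) by (apply atom_mid; auto; split; [auto|unfold c in *; lra]).
    destruct (HF (a :: b :: nil)) as [l' [Hl' [l2 [P F2]]]].
    { split. constructor; [exact A1|constructor; [exact A2|constructor]]. simpl. rewrite <- Hb. ring. }
    inversion F2; subst.
    destruct H4 as [u [Hu E]]. apply sunit_iff in Hu; auto. subst u.
    apply Hn. apply in_concat. exists l'. split; auto.
    apply (Permutation_in _ (Permutation_sym P)). rewrite E, Rmult_1_l. left; reflexivity.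
Qed.
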